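(* Let $(H,+,\circ)$ be a commutative multiplicative hyperring with identity and let $P$ be a proper strong $\mathcal{C}$-hyperideal of $H$. Then $P$ is an sdf-absorbing hyperideal of $H$ if and only if the following holds: whenever $0\neq x,y\in H\setminus P$ satisfy $x\circ y\subseteq P$, there are no $0\neq a,b\in H$ with $a-b=x$ and $a+b=y$.
   Context: A commutative multiplicative hyperring $(H,+,\circ)$ consists of an abelian group $(H,+)$ and an associative, commutative hyperoperation $\circ: H\times H\to P^*(H)$ with $x\circ(y+z)\subseteq x\circ y+x\circ z$ and $x\circ(-y)=-(x\circ y)=(-x)\circ y$. For subsets $A,B$, $A\circ B=\bigcup_{a\in A,b\in B}a\circ b$, $A\pm B=\{a\pm b\}$; $x^2=x\circ x$. Identity: $x\in x\circ 1$ for all $x$. A hyperideal is a nonempty $P$ with $x-y\in P$ and $r\circ x\subseteq P$ for $x,y\in P$, $r\in H$. Let $\mathcal{C}=\{c_1\circ\cdots\circ c_n: c_i\in H,n\in\mathbb{N}\}$ and $\mathfrak{C}=\{\sum_{i=1}^n C_i: C_i\in\mathcal{C}\}$; $P$ is a strong $\mathcal{C}$-hyperideal if for every $D\in\mathfrak{C}$, $D\cap P\neq\varnothing$ implies $D\subseteq P$. A proper hyperideal $P$ is sdf-absorbing if whenever $0\neq x,y\in H$ and $x^2-y^2\subseteq P$, then $x-y\in P$ or $x+y\in P$. *)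

(* Defs.v *)
From mathcomp Require Import all_boot all_algebra.
Set Implicit Arguments. Unset Strict Implicit. Unset Printing Implicit Defensive.
Import GRing.Theory.
Local Open Scope ring_scope.

Definition hset (H : Type) := H -> Prop.

Section Hyper.
Variable H : zmodType.

Definition hsub (A B : hset H) : Prop := forall z, A z -> B z.
Definition hsingle (x : H) : hset H := fun z => z = x.
Definition hadd (A B : hset H) : hset H :=
  fun z => exists a b, A a /\ B b /\ z = a + b.
Definition hminus (A B : hset H) : hset H :=
  fun z => exists a b, A a /\ B b /\ z = a - b.
Definition hlift (m : H -> H -> hset H) (A B : hset H) : hset H :=
  fun z => exists a b, A a /\ B b /\ m a b z.
End Hyper.

Record comMulHyperring (H : zmodType) := ComMulHyperring {
  hmul : H -> H -> hset H;
  hone : H;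
  hmul_nonempty : forall x y, exists z, hmul x y z;
  hmul_assoc : forall x y z w,
    hlift hmul (hmul x y) (hsingle z) w <-> hlift hmul (hsingle x) (hmul y z) w;
  hmul_comm : forall x y z, hmul x y z <-> hmul y x z;
  hmul_distr : forall x y z,
    hsub (hmul x (y + z)) (hadd (hmul x y) (hmul x z));
  hmul_oppr : forall x y w, hmul x (- y) w <-> hmul x y (- w);
  hmul_oppl : forall x y w, hmul (- x) y w <-> hmul x y (- w);
  hmul_one : forall x, hmul x hone x
}.

Section Ideals.
Variables (H : zmodType) (R : comMulHyperring H).
Local Notation "x 'o' y" := (hmul R x y) (at level 40).

Definition hyperideal (P : hset H) : Prop :=
  (exists x, P x) /\
  (forall x y, P x -> P y -> P (x - y)) /\
  (forall r x, P x -> hsub (r o x) P).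

Definition proper_hyperideal (P : hset H) : Prop := exists x, ~ P x.

(* c o c_1 o ... o c_n (left-associated; n >= 0 extra factors) : an element of C *)
Fixpoint hprod_aux (A : hset H) (s : seq H) : hset H :=
  match s with
  | [::] => A
  | c :: s' => hprod_aux (hlift (hmul R) A (hsingle c)) s'
  end.
Definition hprod (c : H) (s : seq H) : hset H := hprod_aux (hsingle c) s.

(* C_1 + ... + C_n with n >= 1, each C_i in C : an element of frak C *)
Definition Csum (t0 : H * seq H) (t : seq (H * seq H)) : hset H :=
  foldl (fun A p => hadd A (hprod p.1 p.2)) (hprod t0.1 t0.2) t.

Definition strong_C_hyperideal (P : hset H) : Prop :=
  hyperideal P /\
  forall t0 t, (exists z, Csum t0 t z /\ P z) -> hsub (Csum t0 t) P.

Definition hsq (x : H) : hset H := x o x.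

Definition sdf_absorbing (P : hset H) : Prop :=
  hyperideal P /\ proper_hyperideal P /\
  forall x y, x != 0 -> y != 0 ->
    hsub (hminus (hsq x) (hsq y)) P -> P (x - y) \/ P (x + y).
End Ideals.

(* Main.v *)
Require Import Defs.
From Stdlib Require Import Classical.
From mathcomp Require Import all_boot all_algebra.
Set Implicit Arguments.
Import GRing.Theory.
Local Open Scope ring_scope.

Section Aux.
Variables (H : zmodType) (R : comMulHyperring H).

Definition Dset (a b : H) : hset H :=
  Csum R (a, [:: a]) [:: (- b, [:: a]); (b, [:: a]); (- b, [:: b])].

Lemma Dintro a b p q1 q2 r : hmul R a a p -> hmul R b a q1 -> hmul R b a q2 ->
  hmul R b b r -> Dset a b (p - q1 + q2 - r).
Proof.
move=> Hp Hq1 Hq2 Hr; rewrite /Dset /Csum /=.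
exists (p - q1 + q2), (- r); split; last split; last by [].
  exists (p - q1), q2; split; last split; last by [].
    exists p, (- q1); split; last split; last by [].
      by exists a, a.
    exists (- b), a; split; first by []; split; first by [].
    by apply/hmul_oppl; rewrite opprK.
  by exists b, a.
exists (- b), b; split; first by []; split; first by [].
by apply/hmul_oppl; rewrite opprK.
Qed.

Lemma Dkey a b z : hmul R (a - b) (a + b) z -> Dset a b z.
Proof.
move=> /hmul_distr [u [v [Hu [Hv ->]]]].
move: Hu => /hmul_comm /hmul_distr [p [w [Hp [Hw ->]]]].
move: Hv => /hmul_comm /hmul_distr [q [w' [Hq [Hw' ->]]]].
move: Hw => /hmul_oppr /hmul_comm Hw.
move: Hw' => /hmul_oppr Hw'.
have := @Dintro a b _ _ _ _ Hp Hw Hq Hw'.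
by rewrite !opprK addrA.
Qed.

End Aux.

Theorem mainTheorem4 (H : zmodType) (R : comMulHyperring H) (P : H -> Prop) :
  proper_hyperideal P -> strong_C_hyperideal R P ->
  (sdf_absorbing R P <->
   (forall x y : H, x != 0 -> y != 0 -> ~ P x -> ~ P y ->
      hsub (hmul R x y) P ->
      ~ (exists a b : H, a != 0 /\ b != 0 /\ a - b = x /\ a + b = y))).
Proof.
move=> Hprop [Hid HC]; split.
- move=> [_ [_ Hsdf]] x y _ _ Px Py Hxy [a [b [a0 [b0 [Ex Ey]]]]].
  have [z Hz] := hmul_nonempty R x y.
  have HD : hsub (Dset R a b) P.
    apply: HC; exists z; split; last exact: Hxy.
    by apply: Dkey; rewrite Ex Ey.
  have : P (a - b) \/ P (a + b).
    apply: Hsdf => //.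
    move=> w [p [r [Hp [Hr ->]]]].
    have [q Hq] := hmul_nonempty R b a.
    have := @Dintro _ R _ _ _ _ _ _ Hp Hq Hq Hr.
    rewrite addrNK => Hw; exact: HD.
  by rewrite Ex Ey; case.
- move=> Hcond; split; first exact: Hid; split; first exact: Hprop.
  move=> x y x0 y0 Hsq.
  have P0 : P 0.
    case: Hid => [[w Pw] [Hsub _]]; have := Hsub w w Pw Pw; by rewrite subrr.
  case: (classic (P (x - y))) => Hm; first by left.
  case: (classic (P (x + y))) => Hp; first by right.
  exfalso.
  have [p Hpp] := hmul_nonempty R x x.
  have [r Hr] := hmul_nonempty R y y.
  have [q Hq] := hmul_nonempty R y x.
  have HD : hsub (Dset R x y) P.
    apply: HC; exists (p - r); split.
      by have := @Dintro _ R _ _ _ _ _ _ Hpp Hq Hq Hr; rewrite addrNK.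
    by apply: Hsq; exists p, r.
  apply: (Hcond (x - y) (x + y)) => //.
  + by apply/eqP => E; apply: Hm; rewrite E.
  + by apply/eqP => E; apply: Hp; rewrite E.
  + by move=> z Hz; apply: HD; apply: Dkey.
  + by exists x, y.
Qed.
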